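(* Consider the parametrized system described in the context, assume $m_x\ge m_\xi$, and let $\Gamma\in\mathbb{R}^{m_y\times m_\xi}$ be a given right tangential interpolation matrix at $(\Xi,\Pi)$. Then a value $\theta\in\mathbf\Theta$ is consistent with $\Gamma$ if and only if the equation $$\begin{bmatrix}A(\theta)&B(\theta)\\ C(\theta)&D(\theta)\end{bmatrix}\begin{bmatrix}T_1\\ \Pi\end{bmatrix}=\begin{bmatrix}T_1\Xi\\ \Gamma\end{bmatrix}$$ has a solution $T_1\in\mathbb{R}^{m_x\times m_\xi}$ of full column rank.
   Context: Integers $m_x,m_u,m_y,m_v,m_z,m_\theta,m_\xi\ge 1$ are given, together with real matrices $A_{xx}\in\mathbb{R}^{m_x\times m_x}$, $B_{xu}\in\mathbb{R}^{m_x\times m_u}$, $B_{xv}\in\mathbb{R}^{m_x\times m_v}$, $C_{yx}\in\mathbb{R}^{m_y\times m_x}$, $C_{zx}\in\mathbb{R}^{m_z\times m_x}$, $D_{zu}\in\mathbb{R}^{m_z\times m_u}$, $D_{zv}\in\mathbb{R}^{m_z\times m_v}$, $D_{yu}\in\mathbb{R}^{m_y\times m_u}$, $D_{yv}\in\mathbb{R}^{m_y\times m_v}$ and $P_0,\dots,P_{m_\theta}\in\mathbb{R}^{m_v\times m_z}$. For $\theta\in\mathbb{R}^{m_\theta}$ put $P(\theta)=P_0+\sum_{i=1}^{m_\theta}\theta_iP_i$ and $$\begin{bmatrix}A(\theta)&B(\theta)\\ C(\theta)&D(\theta)\end{bmatrix}=\begin{bmatrix}A_{xx}&B_{xu}\\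 C_{yx}&D_{yu}\end{bmatrix}+\begin{bmatrix}B_{xv}\\ D_{yv}\end{bmatrix}[I_{m_v}-P(\theta)D_{zv}]^{-1}P(\theta)\begin{bmatrix}C_{zx}&D_{zu}\end{bmatrix},$$ the system matrices of $\dot x=A(\theta)x+B(\theta)u$, $y=C(\theta)x+D(\theta)u$. A compact set $\mathbf{\Theta}\subset\mathbb{R}^{m_\theta}$ is given with $I_{m_v}-P(\theta)D_{zv}$ invertible for all $\theta\in\mathbf\Theta$. Matrices $\Xi\in\mathbb{R}^{m_\xi\times m_\xi}$, $\Pi\in\mathbb{R}^{m_u\times m_\xi}$ are given. A value $\theta$ is called consistent with $\Gamma$ if the system with matrices $A(\theta),B(\theta),C(\theta),D(\theta)$ matches $\Gamma$ in the following sense: there exist a nonsingular $T\in\mathbb{R}^{m_x\times m_x}$ and real matrices $G\in\mathbb{R}^{m_\xi\times m_u}$, $Z\in\mathbb{R}^{m_\xi\times(m_x-m_\xi)}$, $S\in\mathbb{R}^{(m_x-m_\xi)\times m_u}$, $F\in\mathbb{R}^{(m_x-m_\xi)\times(m_x-m_\xi)}$, $K\in\mathbb{R}^{m_y\times m_u}$, $H\in\mathbb{R}^{m_y\times(m_x-m_\xi)}$ with $$\begin{bmatrix}A(\theta)&B(\theta)\\ C(\theta)&D(\theta)\end{bmatrix}=\begin{bmatrix}T&0\\0&I_{m_y}\end{bmatrix}\begin{bmatrix}\Xi-G\Pi&Z&G\\ -S\Pi&F&S\\ \Gamma-K\Pi&H&K\end{bmatrix}\begin{bmatrix}T^{-1}&0\\0&I_{m_u}\end{bmatrix}.$$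 *)

(* Defs.v *)
From HB Require Import structures.
From mathcomp Require Import all_boot all_order all_algebra.
From mathcomp Require Import all_classical all_reals all_analysis.
Set Implicit Arguments. Unset Strict Implicit. Unset Printing Implicit Defensive.
Import Order.TTheory GRing.Theory Num.Theory.
Import numFieldNormedType.Exports.
Local Open Scope ring_scope.

Definition Pth (R : realType) (mv mz mt : nat)
  (P0 : 'M[R]_(mv, mz)) (Ps : 'I_mt -> 'M[R]_(mv, mz)) (th : 'rV[R]_mt)
  : 'M[R]_(mv, mz) :=
  P0 + \sum_(i < mt) th 0 i *: Ps i.

(* The full system matrix [A(θ) B(θ); C(θ) D(θ)] as an LFT. *)
Definition sysmx (R : realType) (mx mu my mv mz mt : nat)
  (Axx : 'M[R]_mx) (Bxu : 'M[R]_(mx, mu)) (Bxv : 'M[R]_(mx, mv))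
  (Cyx : 'M[R]_(my, mx)) (Czx : 'M[R]_(mz, mx))
  (Dzu : 'M[R]_(mz, mu)) (Dzv : 'M[R]_(mz, mv))
  (Dyu : 'M[R]_(my, mu)) (Dyv : 'M[R]_(my, mv))
  (P0 : 'M[R]_(mv, mz)) (Ps : 'I_mt -> 'M[R]_(mv, mz)) (th : 'rV[R]_mt)
  : 'M[R]_(mx + my, mx + mu) :=
  let P := Pth P0 Ps th in
  block_mx Axx Bxu Cyx Dyu
  + col_mx Bxv Dyv *m invmx (1%:M - P *m Dzv) *m P *m row_mx Czx Dzu.

Definition midmx (R : realType) (mx mu my mxi : nat) (Hle : (mxi <= mx)%N)
  (Xi : 'M[R]_mxi) (Pi : 'M[R]_(mu, mxi)) (Gam : 'M[R]_(my, mxi))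
  (G : 'M[R]_(mxi, mu)) (Z : 'M[R]_(mxi, mx - mxi)) (S : 'M[R]_(mx - mxi, mu))
  (F : 'M[R]_(mx - mxi)) (K : 'M[R]_(my, mu)) (H : 'M[R]_(my, mx - mxi))
  : 'M[R]_(mx + my, mx + mu) :=
  let E : (mxi + (mx - mxi) = mx)%N := subnKC Hle in
  castmx (f_equal (addn^~ my) E, f_equal (addn^~ mu) E)
    (col_mx
       (col_mx (row_mx (row_mx (Xi - G *m Pi) Z) G)
               (row_mx (row_mx (- (S *m Pi)) F) S))
       (row_mx (row_mx (Gam - K *m Pi) H) K)).

Definition consistent (R : realType) (mx mu my mxi : nat) (Hle : (mxi <= mx)%N)
  (Xi : 'M[R]_mxi) (Pi : 'M[R]_(mu, mxi)) (Gam : 'M[R]_(my, mxi))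
  (M : 'M[R]_(mx + my, mx + mu)) : Prop :=
  exists (T : 'M[R]_mx) (G : 'M[R]_(mxi, mu)) (Z : 'M[R]_(mxi, mx - mxi))
         (S : 'M[R]_(mx - mxi, mu)) (F : 'M[R]_(mx - mxi))
         (K : 'M[R]_(my, mu)) (H : 'M[R]_(my, mx - mxi)),
    T \in unitmx /\
    M = block_mx T 0 0 1%:M *m midmx Hle Xi Pi Gam G Z S F K H
        *m block_mx (invmx T) 0 0 1%:M.

(* Main.v *)
Require Import Defs.
From HB Require Import structures.
From mathcomp Require Import all_boot all_order all_algebra.
From mathcomp Require Import all_classical all_reals all_analysis.
Import Order.TTheory GRing.Theory Num.Theory.
Import numFieldNormedType.Exports.
Local Open Scope ring_scope.

Lemma split9 (R : realType) (k n my mu : nat) (N : 'M[R]_(k + n + my, k + n + mu)) :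
  exists a b c d e f g h i,
  N = col_mx (col_mx (row_mx (row_mx a b) c) (row_mx (row_mx d e) f))
             (row_mx (row_mx g h) i).
Proof.
set N1 := usubmx (usubmx N); set N2 := dsubmx (usubmx N); set N3 := dsubmx N.
exists (lsubmx (lsubmx N1)), (rsubmx (lsubmx N1)), (rsubmx N1),
  (lsubmx (lsubmx N2)), (rsubmx (lsubmx N2)), (rsubmx N2),
  (lsubmx (lsubmx N3)), (rsubmx (lsubmx N3)), (rsubmx N3).
by rewrite !hsubmxK /N1 /N2 /N3 !vsubmxK.
Qed.

Lemma key (R : realType) (k n my mu mx : nat) (E : (k + n = mx)%N)
  (Xi : 'M[R]_k) (Pi : 'M[R]_(mu, k)) (Gam : 'M[R]_(my, k))
  (M : 'M[R]_(mx + my, mx + mu)) :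
  (exists (T : 'M[R]_mx) (G : 'M[R]_(k, mu)) (Z : 'M[R]_(k, n))
         (S : 'M[R]_(n, mu)) (F : 'M[R]_n)
         (K : 'M[R]_(my, mu)) (H : 'M[R]_(my, n)),
    T \in unitmx /\
    M = block_mx T 0 0 1%:M *m
     castmx (f_equal (addn^~ my) E, f_equal (addn^~ mu) E)
    (col_mx
       (col_mx (row_mx (row_mx (Xi - G *m Pi) Z) G)
               (row_mx (row_mx (- (S *m Pi)) F) S))
       (row_mx (row_mx (Gam - K *m Pi) H) K))
        *m block_mx (invmx T) 0 0 1%:M)
  <->
  exists T1 : 'M[R]_(mx, k),
    \rank T1 = k /\ M *m col_mx T1 Pi = col_mx (T1 *m Xi) Gam.
Proof.
case: mx / E M => M.
set X : 'M[R]_(k + n + mu, k) := col_mx (pid_mx k) Pi.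
have HX : forall (T : 'M[R]_(k+n)), block_mx T 0 0 1%:M *m X = col_mx (T *m pid_mx k) Pi.
  by move=> T; rewrite /X mul_block_col !mul0mx mul1mx addr0 add0r.
have HT : forall p (T : 'M[R]_(k+n)), T \in unitmx ->
   block_mx (invmx T) 0 0 1%:M *m block_mx T 0 0 1%:M = 1%:M :> 'M[R]_(k+n+p).
  move=> p T uT; rewrite mulmx_block !mulmx0 !mul0mx !mulmx1 !addr0 !add0r mulVmx //.
  by rewrite -scalar_mx_block.
have HT' : forall p (U : 'M[R]_(k+n)), U \in unitmx ->
   block_mx U 0 0 1%:M *m block_mx (invmx U) 0 0 1%:M = 1%:M :> 'M[R]_(k+n+p).
  move=> p U uT; rewrite mulmx_block !mulmx0 !mul0mx !mulmx1 !addr0 !add0r mulmxV //.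
  by rewrite -scalar_mx_block.
split.
- move=> [T0 [G [Z [S [F [K [H [uT ->]]]]]]]]; rewrite castmx_id.
  exists (T0 *m pid_mx k); split.
    apply/eqP; rewrite eqn_leq; apply/andP; split.
      by apply: leq_trans (mxrankM_maxr _ _) _; rewrite rank_pid_mx // leq_addr.
    have := mxrankM_maxr (invmx T0) (T0 *m (pid_mx k : 'M[R]_(k+n,k))).
    by rewrite mulmxA mulVmx // mul1mx rank_pid_mx // leq_addr.
  rewrite -!mulmxA mul_block_col !mul0mx !mul1mx !addr0 !add0r (mulmxA (invmx T0)) mulVmx // mul1mx.
  rewrite pid_mx_col.
  set N := col_mx _ _.
  have -> : N *m col_mx (col_mx 1%:M 0) Pi = col_mx (col_mx Xi 0) Gam.
    rewrite /N !mul_col_mx !(mul_row_col (n1:=k+n)) !(mul_row_col (n1:=k)).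
    by rewrite !mulmx1 !mulmx0 !addr0 !subrK addNr.
  rewrite (mul_block_col (n1:=k+n)) !mul0mx !mul1mx !addr0 add0r.
  by rewrite (mul_col_mx (m1:=k)) mul1mx mul0mx.
- move=> [T1 [rT1 eqT1]].
  set L := col_ebase T1; set U := row_ebase T1.
  set T : 'M[R]_(k+n) := L *m block_mx U 0 0 (1%:M : 'M[R]_n).
  have uT : T \in unitmx.
    rewrite unitmx_mul col_ebase_unit /= unitmxE (det_ublock U) unitrM.
    by rewrite -unitmxE row_ebase_unit det1 unitr1.
  have TP : T *m pid_mx k = T1.
    rewrite -[in RHS](mulmx_ebase T1) rT1 -/L -/U /T -!mulmxA; congr (L *m _).
    rewrite pid_mx_col (mul_block_col (n1:=k)) !mulmx0 !mulmx1 !addr0.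
    by rewrite (mul_col_mx (m1:=k)) mul1mx mul0mx.
  set N := block_mx (invmx T) 0 0 1%:M *m M *m block_mx T 0 0 1%:M.
  have MN : M = block_mx T 0 0 1%:M *m N *m block_mx (invmx T) 0 0 1%:M.
    by rewrite /N !mulmxA (HT' my T uT) mul1mx -mulmxA (HT' mu T uT) mulmx1.
  have NX : N *m col_mx (col_mx 1%:M 0) Pi = col_mx (col_mx Xi 0) Gam.
    rewrite -pid_mx_col /N -mulmxA mul_block_col !mul0mx !mul1mx !addr0 add0r TP.
    rewrite -mulmxA eqT1 mul_block_col !mul0mx !mul1mx !addr0 add0r.
    by rewrite -TP (mulmxA (invmx T)) (mulmxA (invmx T)) mulVmx // mul1mx pid_mx_col (mul_col_mx (m1:=k)) mul1mx mul0mx.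
  have [a [b [c [d [e [f [g [h [i EN]]]]]]]]] := @split9 R k n my mu N.
  move: NX; rewrite EN !mul_col_mx !(mul_row_col (n1:=k+n)) !(mul_row_col (n1:=k)).
  rewrite !mulmx1 !mulmx0 !addr0 => /eq_col_mx [/eq_col_mx [E1 E2] E3].
  exists T, c, b, f, e, i, h; split => //; rewrite castmx_id MN EN.
  have -> : a = Xi - c *m Pi by rewrite -E1 addrK.
  have -> : g = Gam - i *m Pi by rewrite -E3 addrK.
  have -> : d = - (f *m Pi) by apply/eqP; rewrite -addr_eq0 E2.
  by [].
Qed.

Theorem theorem2 (R : realType) (mx mu my mv mz mt mxi : nat)
  (hmx : (0 < mx)%N) (hmu : (0 < mu)%N) (hmy : (0 < my)%N) (hmv : (0 < mv)%N)
  (hmz : (0 < mz)%N) (hmt : (0 < mt)%N) (hmxi : (0 < mxi)%N)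
  (Axx : 'M[R]_mx) (Bxu : 'M[R]_(mx, mu)) (Bxv : 'M[R]_(mx, mv))
  (Cyx : 'M[R]_(my, mx)) (Czx : 'M[R]_(mz, mx))
  (Dzu : 'M[R]_(mz, mu)) (Dzv : 'M[R]_(mz, mv))
  (Dyu : 'M[R]_(my, mu)) (Dyv : 'M[R]_(my, mv))
  (P0 : 'M[R]_(mv, mz)) (Ps : 'I_mt -> 'M[R]_(mv, mz))
  (Theta : set 'rV[R]_mt) (hTheta : compact Theta)
  (hinv : forall th, Theta th -> (1%:M - Pth P0 Ps th *m Dzv) \in unitmx)
  (Xi : 'M[R]_mxi) (Pi : 'M[R]_(mu, mxi))
  (Hle : (mxi <= mx)%N) (Gam : 'M[R]_(my, mxi))
  (th : 'rV[R]_mt) (hth : Theta th) :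
  consistent Hle Xi Pi Gam
    (sysmx Axx Bxu Bxv Cyx Czx Dzu Dzv Dyu Dyv P0 Ps th)
  <->
  exists T1 : 'M[R]_(mx, mxi),
    \rank T1 = mxi /\
    sysmx Axx Bxu Bxv Cyx Czx Dzu Dzv Dyu Dyv P0 Ps th *m col_mx T1 Pi
    = col_mx (T1 *m Xi) Gam.
Proof.
have K := @key R mxi (mx - mxi) my mu mx (subnKC Hle) Xi Pi Gam
  (sysmx Axx Bxu Bxv Cyx Czx Dzu Dzv Dyu Dyv P0 Ps th).
rewrite /consistent /midmx /=. exact K.
Qed.
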